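(* Let $\Pi$ be a ground HEX-program and $\mathbf{A}$ an interpretation. Let $\mathcal{C}$ be the partition of $A(\Pi)$ into subset-maximal strongly connected components of the graph with edge relation $\rightarrow\cup\rightarrow_e$, and for $C\in\mathcal{C}$ let $\Pi_C=\{r\in\Pi\mid H(r)\cap C\neq\emptyset\}$. If $U\neq\emptyset$ is an unfounded set of $\Pi$ with respect to $\mathbf{A}$, then for some $C\in\mathcal{C}$ the set $U\cap C$ is a nonempty unfounded set of $\Pi_C$ with respect to $\mathbf{A}$.
   Context: Ground HEX-programs. A ground ordinary atom is $p(c_1,\dots,c_\ell)$. A ground external atom is $\&g[\vec p](\vec c)$ with input list $\vec p=p_1,\dots,p_k$ (predicate names or constants) and output constants $\vec c$. A ground HEX-program is a finite set of rules $r$: $a_1\lor\dots\lor a_k\leftarrow b_1,\dots,b_m,\mathrm{not}\,b_{m+1},\dots,\mathrm{not}\,b_n$, with ordinary ground head atoms $a_i$ and each $b_j$ an ordinary or external ground atom; $H(r)=\{a_1,\dots,a_k\}$, $B^+(r)=\{b_1,\dots,b_m\}$, $B^-(r)=\{b_{m+1},\dots,b_n\}$, $B(r)$ the set of body literals. $A(\Pi)$ is the set of ordinary atoms occurring in $\Pi$. Interpretations: complete consistent sets $\mathbf{A}$ of signed literals $\mathbf{T}a$/$\mathbf{F}a$. $\mathbf{A}\models a$ (ordinary) iff $\mathbf{T}a\in\mathbf{A}$; $\mathbf{A}\models\&g[\vec p](\vec c)$ iff the Boolean oracle $f_{\&g}(\mathbf{A},\vec p,\vec c)=1$, where the oracle's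 value depends only on the extensions in $\mathbf{A}$ of the input predicates in $\vec p$; $\mathbf{A}\models\mathrm{not}\,b$ iff $\mathbf{A}\not\models b$. Unfounded sets: for a set $X$ of ordinary ground atoms appearing in $\Pi$, $\mathbf{A}\,\dot\cup\neg.\,X=(\mathbf{A}\setminus\{\mathbf{T}a\mid a\in X\})\cup\{\mathbf{F}a\mid a\in X\}$; $X$ is an unfounded set of $\Pi$ w.r.t. $\mathbf{A}$ iff for every $r\in\Pi$ with $H(r)\cap X\neq\emptyset$: (i) some literal of $B(r)$ is false w.r.t. $\mathbf{A}$, or (ii) some literal of $B(r)$ is false w.r.t. $\mathbf{A}\,\dot\cup\neg.\,X$, or (iii) some atom of $H(r)\setminus X$ is true w.r.t. $\mathbf{A}$. Dependencies: $x\rightarrow y$ iff some $r\in\Pi$ has $x\in H(r)$, $y\in B^+(r)$; $x\rightarrow_e y$ iff some $r\in\Pi$ has $x\in H(r)$ and an external atom $\&g[q_1,\dots,q_n](\vec e)\in B^+(r)\cup B^-(r)$ with some $q_i$ equal to the predicate of $y$. *)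

(* Defs.v *)
From Stdlib Require Import List.
From mathcomp Require Import all_boot.
Set Implicit Arguments. Unset Strict Implicit. Unset Printing Implicit Defensive.

Section Hex.
(* P : predicate names; Atom : ordinary ground atoms; Ext : ground external atoms
   &g[p](c) (input list and outputs fixed per element of Ext). *)
Variables (P Atom Ext : eqType).
Variable pred_of : Atom -> P.
Variable ext_inputs : Ext -> seq P.
Variable oracle : Ext -> (Atom -> bool) -> bool.

(* Interpretations: complete consistent sets of signed literals, i.e. maps
   Atom -> bool (Ta iff A a = true). *)
Definition interp := Atom -> bool.

Definition oracle_input_local : Prop :=
  forall (e : Ext) (A A' : interp),
    (forall a, pred_of a \in ext_inputs e -> A a = A' a) ->
    oracle e A = oracle e A'.

Definition batom := (Atom + Ext)%type.

Record rule := Rule { head : seq Atom; bpos : seq batom; bneg : seq batom }.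

Definition program := seq rule.

Definition batom_true (A : interp) (b : batom) : bool :=
  match b with inl a => A a | inr e => oracle e A end.

Definition body_false (A : interp) (r : rule) : bool :=
  has (fun b => ~~ batom_true A b) (bpos r) || has (batom_true A) (bneg r).

Definition unfalsify (A : interp) (X : pred Atom) : interp :=
  fun a => A a && ~~ X a.

Definition is_ord (a : Atom) (b : batom) : bool :=
  match b with inl a' => a' == a | inr _ => false end.
Definition atoms_of (Pi : program) : pred Atom :=
  fun a => has (fun r => (a \in head r) || has (is_ord a) (bpos r)
                         || has (is_ord a) (bneg r)) Pi.

(* X is an unfounded set of Pi w.r.t. A, where X ranges over sets of atoms of
   the domain D (D = A(Pi) of the ambient program). *)
Definition unfounded (D : pred Atom) (Pi : program) (A : interp) (X : pred Atom)
  : Prop :=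
  {subset X <= D} /\
  forall r, List.In r Pi -> has X (head r) ->
    [|| body_false A r, body_false (unfalsify A X) r
      | has (fun a => ~~ X a && A a) (head r)].

Definition is_ext_on (y : Atom) (b : batom) : bool :=
  match b with inl _ => false | inr e => pred_of y \in ext_inputs e end.

Definition dep (Pi : program) : rel Atom :=
  fun x y => atoms_of Pi x && atoms_of Pi y &&
    has (fun r => (x \in head r) &&
                  (has (is_ord y) (bpos r)
                   || has (is_ext_on y) (bpos r) || has (is_ext_on y) (bneg r))) Pi.

Definition reach (Pi : program) (x y : Atom) : Prop :=
  exists p : seq Atom, path (dep Pi) x p && (last x p == y).

Definition is_scc (Pi : program) (C : pred Atom) : Prop :=
  exists x, atoms_of Pi x /\
    forall y, C y <-> (atoms_of Pi y /\ reach Pi x y /\ reach Pi y x).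

Definition restrict (Pi : program) (C : pred Atom) : program :=
  filter (fun r => has C (head r)) Pi.

End Hex.

(* Main.v *)
Require Import Defs.
From mathcomp Require Import all_boot.
From Stdlib Require List.
From Stdlib Require Import ClassicalEpsilon Classical.
Set Implicit Arguments. Unset Strict Implicit. Unset Printing Implicit Defensive.

Lemma In_filter_In (T : Type) (p : pred T) (s : seq T) x :
  List.In x (filter p s) -> List.In x s /\ p x.
Proof.
elim: s => //= y s IH; case: ifP => Hy /=.
- by case=> [<-|/IH [H1 H2]]; [split; [left|]|split; [right|]].
- by move=> /IH [H1 H2]; split; [right|].
Qed.

Lemma has_In (T : Type) (p : pred T) (s : seq T) x :
  List.In x s -> p x -> has p s.
Proof.
elim: s => //= y s IH [<- ->//|/IH H px]; by rewrite H ?orbT.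
Qed.

Lemma count_lt (T : eqType) (p q : pred T) (s : seq T) x :
  (forall y, p y -> q y) -> x \in s -> q x -> ~~ p x -> count p s < count q s.
Proof.
move=> Hpq; elim: s => //= y s IH; rewrite in_cons => /orP [/eqP <- qx npx|xs qx npx].
- rewrite qx (negbTE npx) /= add0n add1n ltnS.
  by apply: sub_count => z; apply: Hpq.
- have := IH xs qx npx.
  case py: (p y); first by rewrite (Hpq _ py) /= add1n add1n ltnS.
  by case: (q y) => /= H; rewrite ?add0n ?add1n //; apply: ltnW.
Qed.

Section Proof.
Variables (P Atom Ext : eqType) (pred_of : Atom -> P)
  (ext_inputs : Ext -> seq P) (oracle : Ext -> (Atom -> bool) -> bool).
Variable Pi : program Atom Ext.

Definition R := reach pred_of ext_inputs Pi.

Lemma R_refl x : R x x.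
Proof. by exists [::]; rewrite /= eqxx. Qed.

Lemma R_trans x y z : R x y -> R y z -> R x z.
Proof.
rewrite /R /reach; move=> [p /andP [Hp /eqP Hl]] [q /andP [Hq /eqP Hl']].
exists (p ++ q); rewrite cat_path last_cat Hp Hl Hq Hl' /=; exact: eqxx.
Qed.

Lemma R_dep x y : dep pred_of ext_inputs Pi x y -> R x y.
Proof. by move=> H; rewrite /R /reach; exists [:: y]; rewrite /= H eqxx. Qed.

Definition rb x y : bool :=
  if excluded_middle_informative (R x y) then true else false.

Lemma rbP x y : rb x y <-> R x y.
Proof. by rewrite /rb; case: excluded_middle_informative. Qed.

Definition ord_of (b : batom Atom Ext) : option Atom :=
  match b with inl a => Some a | inr _ => None end.

Definition L : seq Atom :=
  flatten (map (fun r => Defs.head r ++ pmap ord_of (bpos r) ++ pmap ord_of (bneg r)) Pi).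

Lemma has_ord a s : has (is_ord a) s -> a \in pmap ord_of s.
Proof.
move/hasP=> [[a'|e] Hb //= /eqP E]; subst a'.
by rewrite mem_pmap; apply/mapP; exists (inl a).
Qed.

Lemma memL a : atoms_of Pi a -> a \in L.
Proof.
rewrite /atoms_of /L; elim: Pi => //= r s IH /orP [Ha|Ha]; rewrite mem_cat.
- apply/orP; left.
  rewrite !mem_cat; move: Ha => /orP [/orP [->//|/has_ord ->]|/has_ord ->];
    by rewrite ?orbT.
- by rewrite IH ?orbT.
Qed.

Lemma sink (U : pred Atom) : {subset U <= atoms_of Pi} ->
  forall a, U a -> exists a', [/\ U a', R a a' &
    forall b, U b -> R a' b -> R b a'].
Proof.
move=> HU.
suff H : forall n a, count (fun b => U b && rb a b) L <= n -> U a ->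
  exists a', [/\ U a', R a a' & forall b, U b -> R a' b -> R b a'].
  by move=> a; apply: (H _ a (leqnn _)).
elim=> [|n IH] a Hn Ua.
  exfalso; move: Hn; rewrite leqn0 => /eqP H0.
  have : has (fun b => U b && rb a b) L.
    apply/hasP; exists a; first exact: memL (HU _ Ua).
    by rewrite Ua /=; apply/rbP; apply: R_refl.
  by rewrite has_count H0.
case: (classic (forall b, U b -> R a b -> R b a)) => [Hs|Hns].
  by exists a; split=> //; apply: R_refl.
have [b Hb] : exists b, ~ (U b -> R a b -> R b a).
  by apply: not_all_ex_not.
have Ub : U b by apply: NNPP => nU; apply: Hb => /nU.
have Rab : R a b by apply: NNPP => nR; apply: Hb => _ /nR.
have nRba : ~ R b a by move=> H; apply: Hb.
have [a' [Ua' Rba' Hs]] : exists a', [/\ U a', R b a' &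
    forall c, U c -> R a' c -> R c a'].
  apply: IH Ub; rewrite -ltnS; apply: leq_trans Hn.
  apply: (count_lt (x := a)) (memL (HU _ Ua)) _ _.
  - move=> y /andP [-> /rbP H] /=; apply/rbP; exact: R_trans H.
  - by rewrite Ua /=; apply/rbP; apply: R_refl.
  - by apply/negP => /andP [_ /rbP].
by exists a'; split=> //; apply: R_trans Rba'.
Qed.

End Proof.

Theorem proposition3 (P Atom Ext : eqType) (pred_of : Atom -> P)
  (ext_inputs : Ext -> seq P) (oracle : Ext -> (Atom -> bool) -> bool)
  (Hloc : oracle_input_local pred_of ext_inputs oracle)
  (Pi : program Atom Ext) (A : Atom -> bool) (U : pred Atom) :
  unfounded oracle (atoms_of Pi) Pi A U ->
  (exists a, U a) ->
  exists C : pred Atom,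
    is_scc pred_of ext_inputs Pi C /\
    (exists a, U a && C a) /\
    unfounded oracle (atoms_of Pi) (restrict Pi C) A (predI U C).
Proof.
move=> [HU Hr] [a0 Ua0].
have [a [Ua _ Hs]] := sink pred_of ext_inputs HU Ua0.
pose C : pred Atom := fun y => [&& atoms_of Pi y, rb pred_of ext_inputs Pi a y
                                 & rb pred_of ext_inputs Pi y a].
have HC y : C y <-> (atoms_of Pi y /\ R pred_of ext_inputs Pi a y /\
                     R pred_of ext_inputs Pi y a).
  rewrite /C; split.
  - by move=> /and3P [? /rbP ? /rbP ?].
  - by move=> [-> [/rbP -> /rbP ->]].
exists C; split; first by exists a; split; [exact: HU|].
split.
  exists a; rewrite Ua /=; apply/HC; split; first exact: HU.
  by split; apply: R_refl.
split; first by move=> y /andP [/HU].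
move=> r Hin; have [rPi _] := In_filter_In Hin; move=> /hasP [x xh /andP [Ux Cx]].
have K y : dep pred_of ext_inputs Pi x y -> U y -> C y.
  move=> Hd Uy; have /HC [_ [Rax Rxa]] := Cx.
  have Ray : R pred_of ext_inputs Pi a y by apply: R_trans Rax (R_dep Hd).
  apply/HC; split; first by move: Hd => /andP [/andP [_ ->]].
  by split=> //; apply: Hs.
have hU : has U (Defs.head r) by apply/hasP; exists x.
have at_x : atoms_of Pi x by apply: (has_In rPi); rewrite xh.
have Hext e : (inr e \in bpos r) || (inr e \in bneg r) ->
    oracle e (unfalsify A U) = oracle e (unfalsify A (predI U C)).
  move=> He; apply: Hloc => y Hy; rewrite /unfalsify /=.
  case Uy: (U y) => //=.
  have Cy : C y.
    refine (K y _ Uy).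
    have ay : atoms_of Pi y by exact: HU.
    rewrite /dep at_x ay /=.
    apply: (has_In rPi); rewrite xh /=.
    by case/orP: He => H; apply/orP; [left; apply/orP; right|right];
      apply/hasP; exists (inr e).
  by rewrite Cy.
move: (Hr r rPi hU) => /or3P [->//|H2|H3]; last first.
  apply/or3P; apply: Or33; apply: sub_has H3 => y /andP [nU ->].
  by rewrite andbT negb_and nU.
apply/or3P; apply: Or32; move: H2; rewrite /body_false => /orP [H|H]; apply/orP.
- left; apply/hasP; move: H => /hasP [b bin Hb]; exists b => //.
  case: b bin Hb => [y|e] bin /=.
  + rewrite /unfalsify /=; case Uy: (U y) => //=.
    have -> // : C y.
    refine (K y _ Uy); rewrite /dep at_x /=.
    have at_y : atoms_of Pi y.
      apply: (has_In rPi); apply/orP; left; apply/orP; right.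
      by apply/hasP; exists (inl y) => //=.
    rewrite at_y /=; apply: (has_In rPi); rewrite xh /=.
    by apply/orP; left; apply/orP; left; apply/hasP; exists (inl y) => //=.
  + by rewrite -Hext // bin.
- right; apply/hasP; move: H => /hasP [b bin Hb]; exists b => //.
  case: b bin Hb => [y|e] bin /=.
  + by rewrite /unfalsify /= => /andP [-> nU]; rewrite negb_and nU.
  + by rewrite -Hext // bin orbT.
Qed.
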